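(* Let $e_1,\dots,e_k\in\mathbb{C}^{n\times n}$ be an anticommuting family and let $r:=\min_{i\in[k]}\mathrm{rk}(e_i^2)$. (1) If $r>n(1-1/c)$ for some positive integer $c$, then $k\le c\,n^{2/c}$. (2) If $r> n\left(1-\frac{1}{2(\log_2 n+1)}\right)$, then $k\le 2\log_2 n+1$.
   Context: A family $e_1,\dots,e_k$ of complex $n\times n$ matrices is called anticommuting if $e_ie_j=-e_je_i$ for all distinct $i,j\in[k]=\{1,\dots,k\}$. $\mathrm{rk}$ denotes matrix rank. *)

(* Defs.v *)
From HB Require Import structures.
From mathcomp Require Import all_boot all_order all_algebra.
From Stdlib Require Import Reals.

Set Implicit Arguments.
Unset Strict Implicit.
Unset Printing Implicit Defensive.

Delimit Scope R_scope with Re.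
Local Open Scope ring_scope.

Definition log2 (x : R) : R := (ln x / ln 2)%Re.

Definition anticommuting (C : ringType) (n k : nat) (e : 'I_k -> 'M[C]_n) : Prop :=
  forall i j : 'I_k, i != j -> e i *m e j = - (e j *m e i).

(* r := min_i rk(e_i^2); for k = 0 the (empty) minimum defaults to n. *)
Definition min_rank_sq (C : fieldType) (n k : nat) (e : 'I_k -> 'M[C]_n) : nat :=
  \big[minn/n]_(i < k) \rank (e i *m e i).

(* Main.v *)
Require Import Defs.
From HB Require Import structures.
From mathcomp Require Import all_boot all_order all_algebra.
From Stdlib Require Import Reals.
From mathcomp Require Import zify.
From Stdlib Require Import Lra.
From Stdlib Require ZArith.

Module AlgPart.
Set Implicit Arguments. Unset Strict Implicit. Unset Printing Implicit Defensive.
Import GRing.Theory Num.Theory.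
Local Open Scope ring_scope.

Section Alg.
Variables (C : numClosedFieldType) (n k : nat) (e : 'I_k -> 'M[C]_n).
Hypothesis ac : anticommuting e.

Definition prodw (w : seq 'I_k) : 'M[C]_n := foldr (fun j M => e j *m M) 1%:M w.
Definition sq j := e j *m e j.
Definition prodsq (w : seq 'I_k) : 'M[C]_n := foldr (fun j M => sq j *m M) 1%:M w.

Lemma prodw_cat u v : prodw (u ++ v) = prodw u *m prodw v.
Proof. elim: u => [|a u IH] /=; first by rewrite mul1mx. by rewrite IH mulmxA. Qed.

Lemma prodw_rcons u j : prodw (rcons u j) = prodw u *m e j.
Proof. by rewrite -cats1 prodw_cat /= mulmx1. Qed.

Lemma sign_comm j w :
  e j *m prodw w = (-1) ^+ (count (predC1 j) w) *: (prodw w *m e j).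
Proof.
elim: w => [|a w IH] /=; first by rewrite mul1mx mulmx1 expr0 scale1r.
rewrite mulmxA.
have [->|ne] := eqVneq a j.
  have -> : addn (~~ true) (count (predC1 j) w) = count (predC1 j) w by [].
  by rewrite -mulmxA {1}IH -scalemxAr mulmxA.
rewrite ac; last by rewrite eq_sym.
have -> : addn (~~ false) (count (predC1 j) w) = (count (predC1 j) w).+1 by [].
rewrite exprS mulNmx -[X in - X = _]mulmxA IH -scalemxAr mulN1r scaleNr mulmxA.
by [].
Qed.

Lemma sq_comm a j : e a *m sq j = sq j *m e a.
Proof.
rewrite /sq; have [->|ne] := eqVneq a j; first by rewrite mulmxA.
by rewrite mulmxA (ac ne) mulNmx -[X in - X = _]mulmxA (ac ne) mulmxN opprK mulmxA.
Qed.

Lemma prodsq_comm a w : e a *m prodsq w = prodsq w *m e a.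
Proof.
elim: w => [|j w IH] /=; first by rewrite mul1mx mulmx1.
by rewrite mulmxA sq_comm -!mulmxA IH.
Qed.

Lemma prodw_rev w : prodw w *m prodw (rev w) = prodsq w.
Proof.
elim: w => [|a w IH] /=; first by rewrite mulmx1.
rewrite rev_cons prodw_rcons -!mulmxA (mulmxA (prodw w)) IH -prodsq_comm.
by rewrite /sq mulmxA.
Qed.

Lemma prodw_pairs w : prodw (flatten [seq [:: j; j] | j <- w]) = prodsq w.
Proof. elim: w => [|a w IH] //=; by rewrite IH /sq mulmxA. Qed.


Lemma filter_step (I : finType) (P : pred I) (a : I -> C) (X : I -> 'M[C]_n)
  (eps : I -> bool) j :
  (forall i, e j *m X i = (-1) ^+ eps i *: (X i *m e j)) ->
  \sum_(i | P i) a i *: X i = 0 ->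
  forall b, \sum_(i | P i && (eps i == b)) a i *: (X i *m e j) = 0.
Proof.
move=> hc hs b.
have h0 : e j *m (\sum_(i | P i) a i *: X i)
   - (-1) ^+ (~~ b) *: ((\sum_(i | P i) a i *: X i) *m e j) = 0.
  by rewrite hs mulmx0 mul0mx scaler0 subrr.
rewrite mulmx_sumr mulmx_suml scaler_sumr -sumrB (bigID (fun i => eps i == b)) /= in h0.
rewrite [X in _ + X]big1 ?addr0 in h0; last first.
  move=> i /andP[_ hne].
  rewrite -scalemxAr hc.
  have -> : eps i = ~~ b by move: hne; case: (eps i); case: b.
  by rewrite -scalemxAl scalerA scalerA mulrC subrr.
have E : \sum_(i | P i && (eps i == b))
     (e j *m (a i *: X i) - (-1) ^+ (~~ b) *: (a i *: X i *m e j)) =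
   \sum_(i | P i && (eps i == b)) ((-1) ^+ b *+ 2) *: (a i *: (X i *m e j)).
  apply: eq_bigr => i /andP[_ /eqP he].
  rewrite -scalemxAr hc he -scalemxAl scalerA [a i * _]mulrC -scalerA.
  have -> : (-1) ^+ (~~ b) = - (-1) ^+ b :> C by clear; case: b; rewrite ?expr0 ?expr1 ?opprK.
  by rewrite scaleNr opprK -scalerDl mulr2n.
rewrite E in h0.
move: h0; rewrite -scaler_sumr => /eqP; rewrite scaler_eq0 => /orP[|/eqP //].
rewrite mulrn_eq0 /= signr_eq0 //.
Qed.


Definition chi (S : {set 'I_k}) (j : 'I_k) : bool := odd (count (predC1 j) (enum S)).

Lemma iterate (I : finType) (s : I -> {set 'I_k}) (a : I -> C) (i0 : I) :
  \sum_i a i *: prodw (enum (s i)) = 0 ->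
  forall ws, \sum_(i | all (fun j => chi (s i) j == chi (s i0) j) ws)
       a i *: (prodw (enum (s i)) *m prodw ws) = 0.
Proof.
move=> h0; elim/last_ind => [|ws j IH].
  by rewrite -[RHS]h0; apply: eq_bigr => i _; rewrite /= mulmx1.
have := filter_step (P := fun i => all (fun j => chi (s i) j == chi (s i0) j) ws)
  (X := fun i => prodw (enum (s i)) *m prodw ws)
  (eps := fun i => odd (count (predC1 j) (enum (s i) ++ ws))) (j := j) _ IH
  (chi (s i0) j (+) odd (count (predC1 j) ws)).
move=> /(_ _) h.
rewrite -[RHS]h //; last by move=> i; rewrite -prodw_cat sign_comm signr_odd.
apply: eq_big => [i|i _]; last by rewrite prodw_rcons mulmxA.
rewrite all_rcons count_cat oddD /chi andbC.
by case: (odd (count (predC1 j) (enum (s i)))); case: (odd (count (predC1 j) (enum (s i0)))); case: (odd (count (predC1 j) ws)).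
Qed.


Lemma mem_pairs (j : 'I_k) w : (j \in flatten [seq [:: x; x] | x <- w]) = (j \in w).
Proof. elim: w => [|x w IH] //=; by rewrite !inE IH orbA orbb. Qed.

Lemma isolate (I : finType) (s J : I -> {set 'I_k}) (a : I -> C) :
  (forall i i', i' != i -> exists2 j, j \in J i & chi (s i') j != chi (s i) j) ->
  (forall i, prodsq (enum (s i)) *m prodsq (enum (J i :\: s i)) != 0) ->
  \sum_i a i *: prodw (enum (s i)) = 0 -> forall i, a i = 0.
Proof.
move=> hsep hnz h0 i0.
have := iterate i0 h0 (rev (enum (s i0)) ++ flatten [seq [:: j; j] | j <- enum (J i0 :\: s i0)]).
rewrite (bigD1 i0) /=; last by apply/allP => j _; exact: eqxx.
rewrite big1 ?addr0; last first.
  move=> i /andP[hall hne]; exfalso.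
  have [j hj hc] := hsep i0 i hne.
  move/allP: hall => /(_ j) h.
  suff hm : j \in rev (enum (s i0)) ++ flatten [seq [:: j0; j0] | j0 <- enum (J i0 :\: s i0)].
    by move: hc; rewrite (eqP (h hm)) eqxx.
  rewrite mem_cat mem_rev mem_pairs !mem_enum in_setD hj andbT.
  by case: (j \in s i0).
rewrite prodw_cat mulmxA prodw_rev prodw_pairs => /eqP; rewrite scaler_eq0.
by case/orP => [/eqP //|]; rewrite (negbTE (hnz i0)).
Qed.

Lemma prodsq_cat u v : prodsq (u ++ v) = prodsq u *m prodsq v.
Proof. elim: u => [|x u IH] /=; first by rewrite mul1mx. by rewrite IH mulmxA. Qed.

Lemma rank_prodsq w : (n <= \rank (prodsq w) + \sum_(j <- w) (n - \rank (sq j)))%nat.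
Proof.
elim: w => [|x w IH] /=; first by rewrite big_nil addn0 mxrank1.
rewrite big_cons.
have h1 := mxrank_mul_min (sq x) (prodsq w).
have h2 := rank_leq_col (sq x).
move: IH h1 h2; set a := \rank (sq x); set b := \rank (prodsq w); set c := \rank (_ *m _); set t := \sum_(j <- w) _. lia.
Qed.

Lemma nz_of_sum (S J : {set 'I_k}) : S \subset J ->
  (\sum_(j in J) (n - \rank (sq j)) < n)%nat ->
  prodsq (enum S) *m prodsq (enum (J :\: S)) != 0.
Proof.
move=> hSJ hlt; rewrite -prodsq_cat -mxrank_eq0.
have := rank_prodsq (enum S ++ enum (J :\: S)).
rewrite big_cat /= !big_enum /=.
rewrite (big_setID S) /= in hlt.
rewrite (setIidPr hSJ) in hlt.
move: hlt; rewrite -lt0n; set p := \sum_(i in S) _; set q := \sum_(i in J :\: S) _; set r := \rank _; lia.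
Qed.

Lemma card_bound (I : finType) (s J : I -> {set 'I_k}) :
  (forall i i', i' != i -> exists2 j, j \in J i & chi (s i') j != chi (s i) j) ->
  (forall i, s i \subset J i) ->
  (forall i, \sum_(j in J i) (n - \rank (sq j)) < n)%nat ->
  (#|I| <= n * n)%nat.
Proof.
move=> hsep hsub hsum.
pose M := \matrix_(i < #|I|) mxvec (prodw (enum (s (enum_val i)))).
have : row_free M.
  rewrite -kermx_eq0; apply/eqP/row_matrixP => i; rewrite row0.
  set v := row i (kermx M).
  have hv : v *m M = 0 by rewrite /v -row_mul mulmx_ker row0.
  apply/rowP => l; rewrite [X in _ = X]mxE.
  apply: (@isolate _ (s \o enum_val) (J \o enum_val) (fun l => v 0 l)).
  - move=> i1 i2 hne; apply: hsep.
    by apply: contra hne => /eqP /enum_val_inj ->.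
  - by move=> i1; apply: nz_of_sum; [exact: hsub | exact: hsum].
  - move: hv; rewrite mulmx_sum_row.
    under eq_bigr do rewrite rowK.
    move=> h; apply/eqP; rewrite -mxvec_eq0 linear_sum /=; apply/eqP; rewrite -[RHS]h.
    by apply: eq_bigr => i1 _; rewrite linearZ.
move=> /eqP hr; rewrite -hr; exact: rank_leq_col.
Qed.

End Alg.

End AlgPart.
Import AlgPart.

Section RealFacts.

Lemma ln_le' x y : (0 < x -> x <= y -> ln x <= ln y)%Re.
Proof. intros hx [h|h]. left; apply ln_increasing; auto. right; subst; reflexivity. Qed.

Lemma exp_le' x y : (x <= y -> exp x <= exp y)%Re.
Proof. intros [h|h]. left; apply exp_increasing; auto. right; subst; reflexivity. Qed.

Lemma INR_expn (m p : nat) : INR (expn m p) = (INR m ^ p)%Re.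
Proof.
induction p as [|p IH]; first by rewrite expn0.
by rewrite expnS -multE mult_INR IH.
Qed.

Lemma INR_muln (a b : nat) : INR (muln a b) = (INR a * INR b)%Re.
Proof. by rewrite -multE mult_INR. Qed.

Lemma part1_real (n k c : nat) : (0 < c)%N -> (0 < n)%N -> (c <= k)%N ->
  (expn k c <= muln (expn c c) (muln n n))%N -> (INR k <= INR c * Rpower (INR n) (2 / INR c))%Re.
Proof.
move=> hc0 hn0 hck h.
have hc : (0 < INR c)%Re by apply: lt_0_INR; apply/ltP.
have hn : (0 < INR n)%Re by apply: lt_0_INR; apply/ltP.
have hk : (0 < INR k)%Re by apply: lt_0_INR; apply/ltP; apply: leq_trans hck.
move/leP/le_INR: h; rewrite INR_muln !INR_expn INR_muln => h.
have h2 := ln_le' _ _ (pow_lt _ c hk) h.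
rewrite ln_pow // ln_mult ?ln_pow ?ln_mult // in h2; try (by apply: pow_lt); try (by apply: Rmult_lt_0_compat).
idtac.
have h3 : (ln (INR k) <= ln (INR c) + 2 / INR c * ln (INR n))%Re.
  apply: (Rmult_le_reg_l (INR c)) => //.
  have -> : (INR c * (ln (INR c) + 2 / INR c * ln (INR n)) = INR c * ln (INR c) + (ln (INR n) + ln (INR n)))%Re.
    by field; lra.
  lra.
rewrite /Rpower -{1}(exp_ln (INR k)) // -{1}(exp_ln (INR c)) // -exp_plus.
exact: exp_le'.
Qed.


Lemma ln2_pos : (0 < ln 2)%Re.
Proof. have := ln_lt_2; lra. Qed.

Lemma part2_real (n m : nat) : (0 < n)%N -> (1 <= m)%N ->
  (expn 2 (m - 1) <= muln n n)%N -> (INR m <= 2 * log2 (INR n) + 1)%Re.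
Proof.
move=> hn0 hm h.
have hn : (0 < INR n)%Re by apply: lt_0_INR; apply/ltP.
move/leP/le_INR: h; rewrite INR_muln !INR_expn => h.
have h2 := ln_le' _ _ (pow_lt _ (m - 1) Rlt_0_2) h.
rewrite ln_pow ?ln_mult // in h2; last exact: Rlt_0_2.
rewrite -minusE minus_INR in h2; last by apply/leP.
have l2 := ln2_pos.
apply: (Rmult_le_reg_r (ln 2)) => //.
rewrite /log2.
have -> : ((2 * (ln (INR n) / ln 2) + 1) * ln 2 = 2 * ln (INR n) + ln 2)%Re by field; lra.
simpl in h2. lra.
Qed.

End RealFacts.

Lemma binom_lb (k c : nat) : (c <= k)%N -> (expn k c <= muln (expn c c) 'C(k, c))%N.
Proof.
move=> hck.
have hf : (0 < c`!)%N := fact_gt0 c.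
rewrite -(leq_pmul2r hf) -mulnA bin_ffact ffact_prod -ffactnn ffact_prod.
have E : forall x, expn x c = \prod_(i < c) x by move=> x; rewrite prod_nat_const card_ord.
rewrite !E -!big_split /=.
apply: leq_prod => i _.
have hi : (i < c)%N := ltn_ord i.
have h1 : (c * i <= k * i)%N by rewrite leq_mul2r hck orbT.
rewrite !mulnBr; lia.
Qed.

Lemma chiE k (S : {set 'I_k}) j : chi S j = odd #|S| (+) (j \in S).
Proof.
rewrite /chi cardE -(count_predC (pred1 j)) oddD count_uniq_mem ?enum_uniq //.
rewrite mem_enum; by case: (j \in S); case: (odd _).
Qed.

Lemma widen_inj m k (h : (m <= k)%N) : injective (widen_ord h).
Proof. move=> x y hxy; apply: val_inj; exact: (congr1 val hxy). Qed.

Lemma bigmin_le (I : eqType) (s : seq I) (F : I -> nat) (x0 : nat) j :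
  j \in s -> (\big[minn/x0]_(i <- s) F i <= F j)%N.
Proof.
elim: s => [//|a s IH]; rewrite inE big_cons => /orP[/eqP->|hj].
  exact: geq_minl.
by rewrite geq_min IH // orbT.
Qed.

Theorem theorem4p3 (C : numClosedFieldType) (n k : nat) (e : 'I_k -> 'M[C]_n) :
  anticommuting e ->
  (forall c : nat, (0 < c)%N ->
     (INR (min_rank_sq e) > INR n * (1 - / INR c))%Re ->
     (INR k <= INR c * Rpower (INR n) (2 / INR c))%Re)
  /\
  ((INR (min_rank_sq e) > INR n * (1 - / (2 * (log2 (INR n) + 1))))%Re ->
     (INR k <= 2 * log2 (INR n) + 1)%Re).
Proof.
move=> ac.
have hrn : (min_rank_sq e <= n)%N.
  rewrite /min_rank_sq; apply: (big_ind (fun x => x <= n)%N) => //.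
    by move=> x y hx hy; rewrite geq_min hx.
  by move=> i _; exact: rank_leq_col.
have hrj : forall j, (min_rank_sq e <= \rank (sq e j))%N.
  by move=> j; apply: bigmin_le; rewrite mem_index_enum.
set r := min_rank_sq e in hrn hrj *.
have hsum : forall J : {set 'I_k},
    (\sum_(j in J) (n - \rank (sq e j)) <= #|J| * (n - r))%N.
  move=> J; rewrite -sum_nat_const; apply: leq_sum => j _; exact: leq_sub2l (hrj j).
split.
- move=> c hc H.
  have hcR : (0 < INR c)%Re by apply: lt_0_INR; apply/ltP.
  have hnr : (c * (n - r) < n)%N.
    have h1 : (INR n * INR c < INR r * INR c + INR n)%Re.
      have e1 : (INR n * (1 - / INR c) * INR c = INR n * INR c - INR n)%Re.
        by field; lra.
      have := Rmult_lt_compat_r (INR c) _ _ hcR H; rewrite e1; lra.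
    move: h1; rewrite -!INR_muln -plus_INR plusE => /INR_lt/ltP h1.
    have h2 : (c * r <= c * n)%N by rewrite leq_mul2l hrn orbT.
    rewrite mulnBr; move: h1 h2; rewrite [muln n c]mulnC [muln r c]mulnC; lia.
  have hn0 : (0 < n)%N by move: hnr; rewrite lt0n; apply: contraL => /eqP ->.
  have hnR : (1 <= INR n)%Re by apply: (le_INR 1); apply/leP.
  case: (leqP c k) => hck; last first.
    have hR : (1 <= Rpower (INR n) (2 / INR c))%Re.
      rewrite /Rpower -exp_0; apply: exp_le'.
      have : (0 <= ln (INR n))%Re by rewrite -ln_1; apply: ln_le'; lra.
      have : (0 <= 2 / INR c)%Re by apply: Rlt_le; apply: Rdiv_lt_0_compat; lra.
      nra.
    have : (INR k <= INR c)%Re by apply: le_INR; apply/leP; exact: ltnW.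
    nra.
  have hC : ('C(k, c) <= muln n n)%N.
    pose I := {S : {set 'I_k} | #|S| == c}.
    have hcard : #|{: I}| = 'C(k, c).
      rewrite card_sig -[k in 'C(k, _)]card_ord -card_draws.
      by apply: eq_card => S; rewrite !inE.
    rewrite -hcard.
    apply: (card_bound ac (s := val) (J := val)) => //.
    + move=> i i' hne.
      have hi : #|val i| = c by exact: (eqP (valP i)).
      have hi' : #|val i'| = c by exact: (eqP (valP i')).
      have hsub : ~~ (val i \subset val i').
        apply: contra hne => hST; rewrite -val_eqE eq_sym eqEcard hST.
        by move: (valP i) (valP i') => /= /eqP -> /eqP ->.
      have /subsetPn [j hjS hjT] := hsub.
      exists j => //.
      by rewrite !chiE hi hi' hjS (negbTE hjT); case: (odd c).
    + move=> i; apply: leq_ltn_trans (hsum _) _.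
      have hi : #|val i| = c by exact: (eqP (valP i)).
      by rewrite hi.
  apply: part1_real => //.
  by rewrite (leq_trans (@binom_lb _ _ hck)) // leq_mul2l hC orbT.
- move=> H2.
  have hn0 : (0 < n)%N.
    rewrite lt0n; apply/negP => /eqP hn.
    have hr0 : r = 0%N by apply/eqP; rewrite -leqn0 -hn.
    move: H2; rewrite hr0 hn /=; lra.
  have hnR : (1 <= INR n)%Re by apply: (le_INR 1); apply/leP.
  have l2 := ln2_pos.
  have hL : (0 <= log2 (INR n))%Re.
    rewrite /log2; apply: Rmult_le_pos; last by apply: Rlt_le; apply: Rinv_0_lt_compat.
    by rewrite -ln_1; apply: ln_le'; lra.
  set L := log2 (INR n) in H2 hL *.
  have hrnR : INR (n - r) = (INR n - INR r)%Re by rewrite -minusE minus_INR //; apply/leP.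
  have hD : (2 * (L + 1) * INR (n - r) < INR n)%Re.
    have ht : (0 < 2 * (L + 1))%Re by lra.
    have e1 : (INR n * (1 - / (2 * (L + 1))) * (2 * (L + 1)) = INR n * (2 * (L + 1)) - INR n)%Re.
      by field; lra.
    have := Rmult_lt_compat_r _ _ _ ht H2; rewrite e1 hrnR; lra.
  apply: Rnot_lt_le => hk.
  have [hu1 hu2] := archimed (2 * L + 1).
  have hz : (0 <= up (2 * L + 1))%Z.
    apply: BinInt.Z.lt_le_incl; apply: lt_IZR; lra.
  set m := Z.to_nat (up (2 * L + 1)).
  have hmR : INR m = IZR (up (2 * L + 1)) by rewrite INR_IZR_INZ Znat.Z2Nat.id.
  have hmk : (m <= k)%N.
    have : (INR m < INR k.+1)%Re by rewrite S_INR; lra.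
    by move/INR_lt/ltP.
  have hm1 : (0 < m)%N by apply/ltP; apply: INR_lt; rewrite hmR /=; lra.
  have hmD : (m * (n - r) < n)%N.
    apply/ltP; apply: INR_lt; rewrite INR_muln.
    have := pos_INR (n - r); nra.
  pose M := [set widen_ord hmk i | i : 'I_m].
  have hM : #|M| = m by rewrite card_imset ?card_ord //; exact: widen_inj.
  pose j0 := widen_ord hmk (Ordinal hm1).
  have hj0 : j0 \in M by apply: imset_f.
  pose I := {S : {set 'I_k} | S \subset M :\ j0}.
  have hcard : #|{: I}| = expn 2 (m - 1).
    have hMj : #|M :\ j0| = (m - 1)%N.
      by move: (cardsD1 j0 M); rewrite hj0 hM /=; lia.
    rewrite card_sig -hMj -card_powerset.
    by apply: eq_card => S; rewrite powersetE inE.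
  have hb : (expn 2 (m - 1) <= muln n n)%N.
    rewrite -hcard.
    apply: (card_bound ac (s := val) (J := fun _ => M)).
    + move=> i i' hne.
      have hT : val i' \subset M :\ j0 by exact: (valP i').
      have hS : val i \subset M :\ j0 by exact: (valP i).
      have hj0T : j0 \notin val i' by apply/negP => /(subsetP hT); rewrite setD11.
      have hj0S : j0 \notin val i by apply/negP => /(subsetP hS); rewrite setD11.
      case hp: (odd #|val i'| == odd #|val i|).
      * have [j hj] : exists j, (j \in val i') != (j \in val i).
          apply/existsP; apply: (contraNT _ hne) => /existsPn h.
          rewrite -val_eqE; apply/eqP/setP => x; move: (h x).
          by case: (x \in val i'); case: (x \in val i).
        exists j.
          move: hj; case hjT: (j \in val i'); case hjS: (j \in val i) => //= _.
            by move: (subsetP hT j hjT); rewrite in_setD1 => /andP[].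
          by move: (subsetP hS j hjS); rewrite in_setD1 => /andP[].
        rewrite !chiE (eqP hp); move: hj.
        by case: (j \in val i'); case: (j \in val i); case: (odd _).
      * exists j0 => //.
        by rewrite !chiE (negbTE hj0T) (negbTE hj0S) !addbF hp.
    + move=> i; apply: subset_trans (valP i) _; exact: subsetDl.
    + by move=> i; apply: leq_ltn_trans (hsum _) _; rewrite hM.
  have := @part2_real _ _ hn0 hm1 hb; rewrite -/L hmR; lra.
Qed.
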